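(* Let $G=\mathrm{GL}_n$ over a field $k$, acting on $G/Q$ by left multiplication. (i) If $i\in\{2,\dots,n\}$ and $g\in X_i$, then $T_1\subseteq\mathrm{Stab}_T(g)$. (ii) If $j\in\{2,\dots,n\}$ and $g\in X_{1j}$, then $T_j\subseteq\mathrm{Stab}_T(g)$. (iii) $\mathrm{Stab}_T(\mathring g)=\{1\}$.
   Context: $T$ is the diagonal torus, $B$ the upper triangular Borel, $U$ its unipotent radical, $Q$ the mirabolic subgroup of matrices whose last row is $(0,\dots,0,1)$. For $1\le j\le n$, $T_j=\{\mathrm{diag}(1,\dots,1,t_j,1,\dots,1): t_j\in k^\times\}$ (entry $t_j$ in position $j$). For $1\le i\le n$, $w_i$ is the permutation matrix of the transposition $(i\,n)$ (so $w_n=1$), and $X_i=Bw_iQ/Q$; then $G/Q=\bigsqcup_i X_i$. $E_{ij}$ are the elementary matrices, $U_{\alpha_{1j}}=\{\exp(aE_{1j})=1+aE_{1j}\}$. One has $X_1=T\big(\prod_{j=2}^nU_{\alpha_{1j}}\big)w_1Q/Q$; for $2\le j\le n$, $X_{1j}\subset X_1$ is the closed subscheme of elements whose $U_{\alpha_{1j}}$-component is trivial. Finally $\mathring g=\exp\big(\sum_{j=2}^nE_{1j}\big)w_1Q\in X_1$. *)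

(* Defs.v *)
(* GL_N over a field k with N = n.+1 (so N >= 1);
   paper index m in {1..N} corresponds to ordinal m-1 : 'I_n.+1,
   so paper's 1 is ord0 and paper's N is ord_max. *)
From HB Require Import structures.
From mathcomp Require Import all_boot all_order all_algebra.
Set Implicit Arguments. Unset Strict Implicit. Unset Printing Implicit Defensive.
Import GRing.Theory.
Local Open Scope ring_scope.

Definition torus (k : fieldType) (n : nat) (t : 'M[k]_n) : Prop :=
  t \in unitmx /\ forall i j : 'I_n, i != j -> t i j = 0.

Definition borel (k : fieldType) (n : nat) (b : 'M[k]_n) : Prop :=
  b \in unitmx /\ forall i j : 'I_n, (j < i)%N -> b i j = 0.

Definition mirabolic (k : fieldType) (n : nat) (q : 'M[k]_n.+1) : Prop :=
  q \in unitmx /\ forall j : 'I_n.+1, q ord_max j = (j == ord_max)%:R.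

Definition wperm (k : fieldType) (n : nat) (i : 'I_n.+1) : 'M[k]_n.+1 :=
  tperm_mx i ord_max.

Definition same_coset (k : fieldType) (n : nat) (g h : 'M[k]_n.+1) : Prop :=
  mirabolic (invmx g *m h).

Definition inX (k : fieldType) (n : nat) (i : 'I_n.+1) (g : 'M[k]_n.+1) : Prop :=
  exists b q, borel b /\ mirabolic q /\ g = b *m wperm k i *m q.

(* exp(a E_{1j}) = 1 + a E_{1j} *)
Definition Uroot (k : fieldType) (n : nat) (j : 'I_n.+1) (a : k) : 'M[k]_n.+1 :=
  1%:M + a *: delta_mx ord0 j.

(* the point gQ lies in X_{1j}: gQ = t (prod_{l>=2} exp(a_l E_{1l})) w_1 Q
   with t in T and trivial U_{alpha_{1j}}-component a_j = 0 *)
Definition inX1j (k : fieldType) (n : nat) (j : 'I_n.+1) (g : 'M[k]_n.+1) : Prop :=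
  exists (t : 'M[k]_n.+1) (a : 'I_n.+1 -> k) (q : 'M[k]_n.+1),
    [/\ torus t, a j = 0, mirabolic q &
        g = t *m (\prod_(l < n.+1 | l != ord0) Uroot l (a l)) *m wperm k ord0 *m q].

Definition Tj (k : fieldType) (n : nat) (j : 'I_n) (t : 'M[k]_n) : Prop :=
  exists c : k, c != 0 /\ t = diag_mx (\row_l (if l == j then c else 1)).

Definition stabT (k : fieldType) (n : nat) (g t : 'M[k]_n.+1) : Prop :=
  torus t /\ same_coset (t *m g) g.

(* the point g-ring = exp(sum_{j>=2} E_{1j}) w_1 Q *)
Definition gcirc (k : fieldType) (n : nat) : 'M[k]_n.+1 :=
  (1%:M + \sum_(j < n.+1 | j != ord0) delta_mx ord0 j) *m wperm k ord0.

(* Main.v *)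
Require Import Defs.
From HB Require Import structures.
From mathcomp Require Import all_boot all_order all_algebra.
From mathcomp Require Import fingroup perm.
Set Implicit Arguments. Unset Strict Implicit.
Local Open Scope ring_scope.
Import GRing.Theory.

Section Aux.
Variable k : fieldType.

Lemma e_tperm (n : nat) (a i j : 'I_n) :
  delta_mx (0 : 'I_1) a *m (tperm_mx i j : 'M[k]_n) = delta_mx 0 (tperm i j a).
Proof.
rewrite -rowE; apply/rowP => z; rewrite !mxE eqxx /= eq_sym.
by [].
Qed.

Lemma tperm_mx2 (n : nat) (i j : 'I_n) :
  (tperm_mx i j : 'M[k]_n) *m tperm_mx i j = 1%:M.
Proof.
rewrite /tperm_mx -perm_mxM.
have -> : (tperm i j * tperm i j = 1)%g.
  by rewrite -{2}(mulg1 (tperm i j)) tpermKg.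
exact: perm_mx1.
Qed.

Lemma diag_nz (m : nat) (A : 'M[k]_m) (j : 'I_m) :
  A \in unitmx -> (forall i, i != j -> A i j = 0) -> A j j != 0.
Proof.
move=> uA hA; apply/negP => /eqP H0.
have h : A *m delta_mx j (0 : 'I_1) = 0.
  rewrite -colE; apply/matrixP => a z; rewrite !mxE.
  by case: (eqVneq a j) => [->|/hA]. 
have : delta_mx j (0 : 'I_1) = 0 :> 'cV[k]_m.
  by rewrite -(mulKmx uA (delta_mx j 0)) h mulmx0.
move/matrixP => /(_ j 0); rewrite !mxE !eqxx /=.
by move/eqP; rewrite oner_eq0.
Qed.

Lemma mul_col1 (m : nat) (x : 'rV[k]_m) (A : 'M[k]_m) (j : 'I_m) :
  (forall i, i != j -> A i j = 0) -> (x *m A) 0 j = x 0 j * A j j.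
Proof.
move=> hA; rewrite mxE (bigD1 j) //= big1 ?addr0 // => i ij.
by rewrite hA // mulr0.
Qed.

Definition en (n : nat) : 'rV[k]_n.+1 := delta_mx 0 ord_max.

Lemma stab_suff (n : nat) (g t : 'M[k]_n.+1) :
  g \in unitmx -> t \in unitmx ->
  en n *m invmx g *m t = en n *m invmx g ->
  mirabolic (invmx (t *m g) *m g).
Proof.
move=> ug ut h.
have utg : t *m g \in unitmx by rewrite unitmx_mul ut ug.
split; first by rewrite unitmx_mul unitmx_inv utg ug.
set x := en n *m invmx (t *m g).
have hx : x *m t = en n *m invmx g.
  by rewrite -(mulmxK ug (x *m t)) -(mulmxA x t g) /x mulmxKV.
have hx2 : x = en n *m invmx g.
  by rewrite -(mulmxK ut x) hx -h mulmxK.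
have hrow : row ord_max (invmx (t *m g) *m g) = en n.
  by rewrite rowE -/(en n) mulmxA -/x hx2 mulmxKV.
move=> j; move/rowP: hrow => /(_ j); rewrite !mxE /= => ->.
by [].
Qed.

Lemma stab_nec (n : nat) (g t : 'M[k]_n.+1) :
  g \in unitmx -> t \in unitmx ->
  mirabolic (invmx (t *m g) *m g) ->
  en n *m invmx g *m t = en n *m invmx g.
Proof.
move=> ug ut [_ hM].
have utg : t *m g \in unitmx by rewrite unitmx_mul ut ug.
have hrow : en n *m (invmx (t *m g) *m g) = en n.
  rewrite /en -rowE; apply/rowP => j; rewrite mxE hM !mxE /=.
  by [].
set x := en n *m invmx (t *m g).
have hx : x *m t = en n *m invmx g.
  by rewrite -(mulmxK ug (x *m t)) -(mulmxA x t g) /x mulmxKV.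
have hx2 : x = en n *m invmx g.
  by rewrite -hrow mulmxA mulmxK.
by rewrite -hx2 hx hx2.
Qed.

Lemma mirab_en (n : nat) (q : 'M[k]_n.+1) :
  mirabolic q -> en n *m invmx q = en n.
Proof.
move=> [uq hq].
have h : en n *m q = en n.
  rewrite /en -rowE; apply/rowP => j; rewrite mxE hq !mxE /=.
  by [].
by rewrite -{1}h mulmxK.
Qed.

Lemma diagE (n : nat) (t : 'M[k]_n) :
  (forall i j : 'I_n, i != j -> t i j = 0) -> t = diag_mx (\row_i t i i).
Proof.
move=> h; apply/matrixP => i j; rewrite !mxE.
case: (eqVneq i j) => [->|/h ->]; first by rewrite mulr1n.
by rewrite mulr0n.
Qed.

Lemma Tj_torus (n : nat) (j : 'I_n) (t : 'M[k]_n) : Tj j t -> torus t.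
Proof.
move=> [c [c0 ->]]; split.
  rewrite unitmxE det_diag unitfE; apply/prodf_neq0 => i _.
  by rewrite mxE; case: (i == j) => //; rewrite oner_eq0.
by move=> a b ab; rewrite mxE (negPf ab) mulr0n.
Qed.

Lemma Tj_act (n : nat) (j : 'I_n) (t : 'M[k]_n) (r : 'rV[k]_n) :
  Tj j t -> r 0 j = 0 -> r *m t = r.
Proof.
move=> [c [c0 ->]] hr; rewrite mul_mx_diag; apply/matrixP => a b.
rewrite !mxE ord1; case: (eqVneq b j) => [->|_]; last by rewrite mulr1.
by rewrite hr mul0r.
Qed.

Lemma rdelta (m : nat) (r : 'rV[k]_m) (a b l : 'I_m) :
  (r *m delta_mx a b) 0 l = r 0 a * (b == l)%:R.
Proof.
rewrite mxE (bigD1 a) //= big1 ?addr0 => [|i ia]; rewrite mxE ?eqxx /=.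
  by rewrite eq_sym.
by rewrite (negPf ia) mulr0.
Qed.

Lemma C_unit (n : nat) :
  (1%:M + \sum_(j < n.+1 | j != ord0) delta_mx ord0 j : 'M[k]_n.+1) \in unitmx.
Proof.
set S := \sum_(j < n.+1 | j != ord0) _.
have SS : S *m S = 0.
  rewrite /S mulmx_suml; apply: big1 => j j0; rewrite mulmx_sumr.
  by apply: big1 => l l0; rewrite mul_delta_mx_0.
have h : (1%:M + S) *m (1%:M - S) = 1%:M.
  by rewrite mulmxDl mul1mx mulmxBr mulmx1 SS subr0 subrK.
by case: (mulmx1_unit h).
Qed.

End Aux.

Theorem lemma8p2 (k : fieldType) (n : nat) :
  (forall (i : 'I_n.+1) (g : 'M[k]_n.+1), i != ord0 -> g \in unitmx -> inX i g ->
     forall t : 'M[k]_n.+1, Tj ord0 t -> stabT g t) /\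
  (forall (j : 'I_n.+1) (g : 'M[k]_n.+1), j != ord0 -> g \in unitmx -> inX1j j g ->
     forall t : 'M[k]_n.+1, Tj j t -> stabT g t) /\
  (forall t : 'M[k]_n.+1, stabT (gcirc k n) t <-> t = 1%:M).
Proof.
split.
  move=> i g i0 ug [b [q [[ub hb] [Mq Eg]]]] t hT.
  split; first exact: Tj_torus hT.
  apply: stab_suff => //; first by case: (Tj_torus hT).
  apply: Tj_act hT _.
  set r := en k n *m invmx g.
  have hr : r *m g = en k n by rewrite mulmxKV.
  rewrite Eg !mulmxA in hr.
  have h1 : r *m b *m wperm k i = en k n.
    by rewrite -(mulmxK (proj1 Mq) (r *m b *m wperm k i)) hr mirab_en.
  have h2 : r *m b = delta_mx 0 i.
    rewrite -(mulmx1 (r *m b)) -(tperm_mx2 k i ord_max) mulmxA.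
    by rewrite /wperm in h1; rewrite h1 /en e_tperm tpermR.
  have hb0 : forall a : 'I_n.+1, a != ord0 -> b a ord0 = 0.
    by move=> a a0; apply: hb; move: a0; rewrite -(inj_eq val_inj) /= lt0n.
  have h3 : (r *m b) 0 ord0 = r 0 ord0 * b ord0 ord0 by apply: mul_col1.
  have bnz : b ord0 ord0 != 0 := diag_nz ub hb0.
  move: h3; rewrite h2 mxE /= eq_sym (negPf i0) => /esym/eqP.
  by rewrite mulf_eq0 (negPf bnz) orbF => /eqP.
split.
  move=> j g j0 ug [t0 [a [q [[ut0 dt0] aj Mq Eg]]]] t hT.
  split; first exact: Tj_torus hT.
  apply: stab_suff => //; first by case: (Tj_torus hT).
  apply: Tj_act hT _.
  set r := en k n *m invmx g.
  have hr : r *m g = en k n by rewrite mulmxKV.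
  rewrite Eg !mulmxA in hr.
  set P := \prod_(l < n.+1 | l != ord0) _ in hr.
  have h1 : r *m t0 *m P *m wperm k ord0 = en k n.
    by rewrite -(mulmxK (proj1 Mq) (r *m t0 *m P *m wperm k ord0)) hr mirab_en.
  have h2 : r *m t0 *m P = delta_mx 0 ord0.
    rewrite -(mulmx1 (r *m t0 *m P)) -(tperm_mx2 k ord0 ord_max) mulmxA.
    by rewrite /wperm in h1; rewrite h1 /en e_tperm tpermR.
  have hP : P *m delta_mx j (0 : 'I_1) = delta_mx j 0.
    rewrite /P; apply: (big_ind (fun M : 'M[k]_n.+1 => M *m delta_mx j 0 = delta_mx j 0)).
    - by rewrite -idmxE mul1mx.
    - by move=> x y hx hy; rewrite -mulmxE -mulmxA hy hx.
    - move=> l l0; rewrite /Uroot mulmxDl mul1mx -scalemxAl mul_delta_mx_cond.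
      case: (eqVneq l j) => [->|ne]; first by rewrite aj scale0r addr0.
      by rewrite mulr0n scaler0 addr0.
  have h3 : r *m t0 *m P *m delta_mx j (0 : 'I_1) = 0.
    by rewrite h2 mul_delta_mx_cond eq_sym (negPf j0) mulr0n.
  rewrite -mulmxA hP -colE in h3.
  have h4 : (r *m t0) 0 j = 0.
    by move/matrixP: h3 => /(_ 0 0); rewrite [LHS]mxE [RHS]mxE.
  have tnz : t0 j j != 0 := diag_nz ut0 (fun i ij => dt0 i j ij).
  move: h4; rewrite mul_col1; last by move=> i ij; apply: dt0.
  by move/eqP; rewrite mulf_eq0 (negPf tnz) orbF => /eqP.
move=> t; split; last first.
  move=> ->; split.
    split; first exact: unitmx1.
    by move=> a b ab; rewrite mxE (negPf ab) mulr0n.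
  apply: stab_suff; [|exact: unitmx1|by rewrite mulmx1].
  by rewrite /gcirc unitmx_mul C_unit unitmx_perm.
move=> [[ut dt] St].
have ug : gcirc k n \in unitmx by rewrite /gcirc unitmx_mul C_unit unitmx_perm.
have hs := stab_nec ug ut St.
set r := en k n *m invmx (gcirc k n) in hs.
have hr : r *m gcirc k n = en k n by rewrite mulmxKV.
rewrite /gcirc mulmxA in hr.
set C := (1%:M + _) in hr.
have h1 : r *m C = delta_mx 0 ord0.
  rewrite -(mulmx1 (r *m C)) -(tperm_mx2 k ord0 ord_max) mulmxA.
  by rewrite /wperm in hr; rewrite hr /en e_tperm tpermR.
have hC : forall l, (r *m C) 0 l = r 0 l + (l != ord0)%:R * r 0 ord0.
  move=> l; rewrite /C mulmxDr mulmx1 mulmx_sumr mxE summxE.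
  congr (_ + _).
  under eq_bigr => j _ do rewrite rdelta.
  case: (eqVneq l ord0) => [->|l0].
    by rewrite mul0r big1 // => j j0; rewrite (negPf j0) mulr0.
  rewrite (bigD1 l) //= eqxx mulr1 big1 ?addr0 ?mul1r // => j /andP [_ jl].
  by rewrite (negPf jl) mulr0.
have r0 : r 0 ord0 = 1.
  by move: (hC ord0); rewrite h1 !mxE eqxx mul0r addr0 => <-.
have rnz : forall l, r 0 l != 0.
  move=> l; case: (eqVneq l ord0) => [->|l0]; first by rewrite r0 oner_eq0.
  move: (hC l); rewrite h1 mxE /= l0 (negPf l0) r0 mulr1 => /esym/eqP.
  rewrite addr_eq0 => /eqP ->; by rewrite oppr_eq0 oner_eq0.
have tjj : forall l, t l l = 1.
  move=> l; apply/eqP; move/matrixP: hs => /(_ 0 l).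
  rewrite mul_col1; last by move=> i il; apply: dt.
  by rewrite -{2}(mulr1 (r 0 l)) => /(mulfI (rnz l)) ->.
apply/matrixP => a b; rewrite mxE; case: (eqVneq a b) => [->|ab].
  by rewrite tjj.
by rewrite dt.
Qed.
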